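(* Let $(X,\mathcal{F})$ be the game hypergraph constructed from a 3SAT formula $\varphi$ as described in the context, and consider the strict Avoider-Enforcer game on it in which Enforcer moves first. Consider the restricted game in which both players may only make moves respecting the following order within every box $i$: $a_i$ is claimed before both $x_i$ and $\overline{x_i}$, and $s_i$ is claimed after both $x_i$ and $\overline{x_i}$ (i.e. $x_i$ and $\overline{x_i}$ may only be claimed once $a_i$ is claimed, and $s_i$ only once $x_i$ and $\overline{x_i}$ are claimed). Then Avoider has a winning strategy in the restricted game if and only if she has a winning strategy in the unrestricted game; that is, the outcome of the game is unchanged.
   Context: A (strict) Avoider-Enforcer game is given by a finite board $X$ and a family $\mathcal{F}$ of losing sets; Avoider and Enforcer alternately claim one unclaimed element of $X$ per move until all of $X$ is claimed; Enforcer wins iff Avoider has claimed all elements of some $f\in\mathcal{F}$. Construction from a 3SAT formula $\varphi$ on variables $x_1,\dots,x_n$ (each clause having exactly three literals on three distinct variables): the board is $X=\bigcup_{i=1}^n\{a_i,s_i,x_i,\overline{x_i}\}$, consisting of $4n$ distinct vertices; the set $B_i=\{a_i,s_i,x_i,\overline{x_i}\}$ is called box $i$. The vertices $x_i,\overline{x_i}$ are identified with the literals $x_i,\overline{x_i}$ of $\varphi$. The family $\mathcal{F}$ consists of (1) for each $i$, all four 3-element subsets of $B_i$; and (2) for each clause $C=\ell_i\lor\ell_j\lor\ell_k$ of $\varphi$, where $\ell_h\in\{x_h,\overline{x_h}\}$ for $h=i,j,k$, the set $L_C=\{s_i,s_j,s_k,\overline{\ell_i},\overline{\ell_j},\overline{\ell_k}\}$,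 where $\overline{\ell}$ denotes the negation of literal $\ell$ (with $\overline{\overline{x_h}}=x_h$). *)

(* Defs.v *)
From mathcomp Require Import all_boot.
Set Implicit Arguments. Unset Strict Implicit. Unset Printing Implicit Defensive.

(** Board: vertex (i, k) of box i, with k = 0 : a_i, 1 : s_i, 2 : x_i, 3 : ~x_i. *)
Definition vertex (n : nat) : finType := ('I_n * 'I_4)%type.

Definition k_a : 'I_4 := @Ordinal 4 0 isT.
Definition k_s : 'I_4 := @Ordinal 4 1 isT.
Definition k_x : 'I_4 := @Ordinal 4 2 isT.
Definition k_nx : 'I_4 := @Ordinal 4 3 isT.

Definition va {n} (i : 'I_n) : vertex n := (i, k_a).
Definition vs {n} (i : 'I_n) : vertex n := (i, k_s).
Definition vx {n} (i : 'I_n) : vertex n := (i, k_x).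
Definition vnx {n} (i : 'I_n) : vertex n := (i, k_nx).

Definition box {n} (i : 'I_n) : {set vertex n} := [set va i; vs i; vx i; vnx i].

Definition literal (n : nat) := ('I_n * bool)%type.
Definition lit_vertex {n} (l : literal n) : vertex n :=
  if l.2 then vx l.1 else vnx l.1.
Definition neg_lit {n} (l : literal n) : literal n := (l.1, ~~ l.2).

Definition clause (n : nat) := (literal n * literal n * literal n)%type.
Definition wf_clause {n} (C : clause n) : bool :=
  let: (l1, l2, l3) := C in [&& l1.1 != l2.1, l1.1 != l3.1 & l2.1 != l3.1].

Definition clause_set {n} (C : clause n) : {set vertex n} :=
  let: (l1, l2, l3) := C in
  [set vs l1.1; vs l2.1; vs l3.1;
       lit_vertex (neg_lit l1); lit_vertex (neg_lit l2); lit_vertex (neg_lit l3)].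

Definition losing_family {n} (phi : seq (clause n)) : {set {set vertex n}} :=
  [set L : {set vertex n} | [exists i : 'I_n, (L \subset box i) && (#|L| == 3)]
           || has (fun C => L == clause_set C) phi].

(** Generic strict Avoider-Enforcer game on a finite board T with losing family F
    and a legality predicate [legal A E v] (may v be claimed when Avoider owns A
    and Enforcer owns E).  [awin A E b] : Avoider can force a win from the
    position (A, E), where b = true iff it is Avoider's turn.  This is the
    existence of a winning strategy for Avoider from that position. *)
Inductive awin (T : finType) (F : {set {set T}}) (legal : {set T} -> {set T} -> T -> bool)
  : {set T} -> {set T} -> bool -> Prop :=
| awin_end : forall A E b,
    A :|: E = [set: T] -> (forall L, L \in F -> ~~ (L \subset A)) -> awin F legal A E b
| awin_av : forall A E v,
    v \notin A :|: E -> legal A E v -> awin F legal (v |: A) E false -> awin F legal A E true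
| awin_en : forall A E,
    A :|: E != [set: T] ->
    (forall v, v \notin A :|: E -> legal A E v -> awin F legal A (v |: E) true) ->
    awin F legal A E false.

Definition unrestricted {n} (A E : {set vertex n}) (v : vertex n) : bool := true.

Definition restricted {n} (A E : {set vertex n}) (v : vertex n) : bool :=
  let i := v.1 in
  if v.2 == k_a then true
  else if v.2 == k_s then (vx i \in A :|: E) && (vnx i \in A :|: E)
  else va i \in A :|: E.

(* Main.v *)
Require Import Defs.
From mathcomp Require Import all_boot zify.
Set Implicit Arguments. Unset Strict Implicit. Unset Printing Implicit Defensive.

Section Basics.
Variable n : nat.
Implicit Types (i j k : 'I_n) (S A E : {set vertex n}) (v u : vertex n).

Definition cnt S i : nat := (va i \in S) + (vs i \in S) + (vx i \in S) + (vnx i \in S).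

Lemma kE : ((k_a == k_s) = false) * ((k_a == k_x) = false) * ((k_a == k_nx) = false)
  * ((k_s == k_a) = false) * ((k_s == k_x) = false) * ((k_s == k_nx) = false)
  * ((k_x == k_a) = false) * ((k_x == k_s) = false) * ((k_x == k_nx) = false)
  * ((k_nx == k_a) = false) * ((k_nx == k_s) = false) * ((k_nx == k_x) = false).
Proof. by []. Qed.

Lemma vE i j : ((va i == va j) = (i == j)) * ((vs i == vs j) = (i == j))
  * ((vx i == vx j) = (i == j)) * ((vnx i == vnx j) = (i == j))
  * ((va i == vs j) = false) * ((va i == vx j) = false) * ((va i == vnx j) = false)
  * ((vs i == va j) = false) * ((vs i == vx j) = false) * ((vs i == vnx j) = false)
  * ((vx i == va j) = false) * ((vx i == vs j) = false) * ((vx i == vnx j) = false)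
  * ((vnx i == va j) = false) * ((vnx i == vs j) = false) * ((vnx i == vx j) = false).
Proof. by rewrite /va /vs /vx /vnx !xpair_eqE !kE !eqxx !andbF !andbT. Qed.

Lemma vertex_cases v : exists i, v = va i \/ v = vs i \/ v = vx i \/ v = vnx i.
Proof.
case: v => j [[|[|[|[|k]]]] Hk] //; exists j.
- by left; congr pair; apply: val_inj.
- by right; left; congr pair; apply: val_inj.
- by right; right; left; congr pair; apply: val_inj.
- by right; right; right; congr pair; apply: val_inj.
Qed.

Lemma cnt_add S v j : v \notin S -> cnt (v |: S) j = cnt S j + (v.1 == j).
Proof.
have [k [->|[->|[->|->]]]] := vertex_cases v => vS;
rewrite /cnt !in_setU1 !vE /= eq_sym; case: (eqVneq k j) => [<-|ne];
  rewrite ?(negPf vS) /=; lia.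
Qed.

Lemma cnt_le S i : cnt S i <= 4.
Proof. rewrite /cnt; case: (va i \in S); case: (vs i \in S); case: (vx i \in S); by case: (vnx i \in S). Qed.

Lemma mem_box v i : (v \in box i) = (v.1 == i).
Proof.
have [k [->|[->|[->|->]]]] := vertex_cases v; rewrite /box !inE !vE /=;
  by rewrite ?orbF.
Qed.

Lemma cardIU1 S (x : vertex n) (X : {set vertex n}) : x \notin X -> #|S :&: (x |: X)| = (x \in S) + #|S :&: X|.
Proof.
move=> xX; case xS: (x \in S).
- have -> : S :&: (x |: X) = x |: (S :&: X).
    by apply/setP=> y; rewrite !inE; case: (eqVneq y x) => [->|]; rewrite ?xS.
  by rewrite cardsU1 inE (negPf xX) andbF.
- have -> : S :&: (x |: X) = S :&: X.
    by apply/setP=> y; rewrite !inE; case: (eqVneq y x) => [->|]; rewrite ?xS.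
  by [].
Qed.

Lemma cardI1 S (y : vertex n) : #|S :&: [set y]| = (y \in S).
Proof.
case yS: (y \in S).
- have -> : S :&: [set y] = [set y].
    by apply/setP=> z; rewrite !inE; case: (eqVneq z y) => [->|]; rewrite ?yS ?andbF.
  by rewrite cards1.
- have -> : S :&: [set y] = set0.
    by apply/setP=> z; rewrite !inE; case: (eqVneq z y) => [->|]; rewrite ?yS ?andbF.
  by rewrite cards0.
Qed.

Lemma cardIbox S i : #|S :&: box i| = cnt S i.
Proof.
have -> : box i = va i |: (vs i |: (vx i |: [set vnx i])).
  by apply/setP=> v; rewrite /box !inE !orbA.
rewrite !cardIU1 ?cardI1 /cnt ?addnA // !inE !vE //.
Qed.

Lemma card_sum S : #|S| = \sum_(i < n) cnt S i.
Proof.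
rewrite -sum1_card big_mkcond /=.
transitivity (\sum_(p : 'I_n * 'I_4) (fun (i : 'I_n) (k : 'I_4) => if ((i, k) : vertex n) \in S then 1 else 0) p.1 p.2).
  by apply: eq_bigr => -[].
rewrite -(pair_bigA _ (fun (i : 'I_n) (k : 'I_4) => if ((i, k) : vertex n) \in S then 1 else 0)) /=.
apply: eq_bigr => i _; rewrite !big_ord_recl big_ord0 /cnt addn0 !addnA.
have -> : ((i, ord0) : vertex n) = va i by congr pair; apply: val_inj.
have -> : ((i, lift ord0 ord0) : vertex n) = vs i by congr pair; apply: val_inj.
have -> : ((i, lift ord0 (lift ord0 ord0)) : vertex n) = vx i by congr pair; apply: val_inj.
have -> : ((i, lift ord0 (lift ord0 (lift ord0 ord0))) : vertex n) = vnx i by congr pair; apply: val_inj.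
by case: (va i \in S); case: (vs i \in S); case: (vx i \in S); case: (vnx i \in S).
Qed.
End Basics.

Ltac b4 S i := case: (va i \in S); case: (vs i \in S); case: (vx i \in S); case: (vnx i \in S).

Section Enf1.
Variable n : nat.
Implicit Types (i j k : 'I_n) (S A E : {set vertex n}) (v u : vertex n).

Definition dj A E := forall v, v \in A -> v \in E -> False.
Definition freshb A E i := (cnt A i == 0) && (cnt E i == 0).
Definition goodb A E i := [&& va i \in E, vs i \in A, cnt A i == 2 & cnt E i == 2].
Definition restok A E i := forall j, j != i -> freshb A E j || goodb A E j.

Lemma djb A E u : dj A E -> ~~ ((u \in A) && (u \in E)).
Proof. by move=> d; apply/negP => /andP [] /d. Qed.

Lemma cntU A E i : dj A E -> cnt (A :|: E) i = cnt A i + cnt E i.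
Proof.
move=> d; move: (djb (va i) d) (djb (vs i) d) (djb (vx i) d) (djb (vnx i) d).
rewrite /cnt !inE; b4 A i; b4 E i => //=.
Qed.

Lemma cnt_full S i : cnt S i = 4 -> [&& va i \in S, vs i \in S, vx i \in S & vnx i \in S].
Proof. rewrite /cnt; b4 S i => //=. Qed.

Lemma cnt_notin S v : v \notin S -> cnt S v.1 < 4.
Proof.
have [k [->|[->|[->|->]]]] := vertex_cases v; rewrite /cnt /=; b4 S k => //=.
Qed.

Lemma cnt_only_a S i : cnt S i = 1 -> va i \in S -> [&& vs i \notin S, vx i \notin S & vnx i \notin S].
Proof. rewrite /cnt; b4 S i => //=. Qed.

Lemma cnt_one_x S i : cnt S i = 1 -> vx i \in S -> vnx i \notin S.
Proof. rewrite /cnt; b4 S i => //=. Qed.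

Lemma m2_good A E i v : dj A E -> va i \in E -> vs i \notin E -> cnt E i = 2 -> cnt A i = 1 ->
  v.1 = i -> v \notin A :|: E -> vs i \in v |: A.
Proof.
move=> d ha hs he ha1 vi; subst i.
have [k [vk|[vk|[vk|vk]]]] := vertex_cases v; rewrite vk /= in ha hs he ha1 *;
move: ha hs he ha1 (djb (va k) d) (djb (vs k) d) (djb (vx k) d) (djb (vnx k) d);
rewrite /cnt !inE !vE ?eqxx /=; b4 A k; b4 E k => //=.
Qed.

Lemma good_lit A E j : goodb A E j -> dj A E -> (vx j \in A) || (vnx j \in A).
Proof.
move=> + d; move: (djb (va j) d) (djb (vs j) d) (djb (vx j) d) (djb (vnx j) d).
rewrite /goodb /cnt; b4 A j; b4 E j => //=.
Qed.

Lemma good_full A E j : goodb A E j -> dj A E -> cnt (A :|: E) j = 4.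
Proof. move=> /and4P [_ _ /eqP a /eqP e] d; by rewrite cntU // a e. Qed.

Lemma cnt_indep S v j : v.1 != j -> cnt (v |: S) j = cnt S j.
Proof.
have [k [->|[->|[->|->]]]] := vertex_cases v => /= ne;
rewrite /cnt !in_setU1 !vE eq_sym (negPf ne) //.
Qed.

Lemma mem_indep S v j : v.1 != j ->
  [/\ (va j \in v |: S) = (va j \in S), (vs j \in v |: S) = (vs j \in S),
      (vx j \in v |: S) = (vx j \in S) & (vnx j \in v |: S) = (vnx j \in S)].
Proof.
have [k [->|[->|[->|->]]]] := vertex_cases v => /= ne;
rewrite !in_setU1 !vE eq_sym (negPf ne) //.
Qed.

Lemma restok_addA A E i v : v.1 = i -> restok A E i -> restok (v |: A) E i.
Proof.
move=> vi R j ji; have ne : v.1 != j by rewrite vi eq_sym.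
have [_ e2 _ _] := mem_indep A ne.
by rewrite /freshb /goodb cnt_indep // e2; apply: R.
Qed.

Lemma restok_addE A E i v : v.1 = i -> restok A E i -> restok A (v |: E) i.
Proof.
move=> vi R j ji; have ne : v.1 != j by rewrite vi eq_sym.
have [e1 _ _ _] := mem_indep E ne.
by rewrite /freshb /goodb cnt_indep // e1; apply: R.
Qed.
End Enf1.

Definition csat n (f : 'I_n -> bool) (C : clause n) : bool :=
  let: (l1, l2, l3) := C in [|| f l1.1 == l1.2, f l2.1 == l2.2 | f l3.1 == l3.2].

Section Enf2.
Variable n : nat.
Variable phi : seq (clause n).
Variable legal : {set vertex n} -> {set vertex n} -> vertex n -> bool.
Implicit Types (i j k : 'I_n) (S A E L : {set vertex n}) (v u : vertex n).
Hypothesis Hla : forall A E i, legal A E (va i).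
Hypothesis Hll : forall A E i, va i \in A :|: E -> legal A E (vx i) && legal A E (vnx i).
Hypothesis Hls : forall A E i, vx i \in A :|: E -> vnx i \in A :|: E -> legal A E (vs i).

Lemma sub3 (T : finType) (a b c : T) (B : {set T}) :
  a \in B -> b \in B -> c \in B -> [set a; b; c] \subset B.
Proof. move=> ha hb hc; apply/subsetP => w; rewrite !inE; by move=> /orP [/orP []|] /eqP ->. Qed.

Lemma exists_legal A E i : cnt (A :|: E) i < 4 ->
  exists v, [/\ v.1 = i, v \notin A :|: E & legal A E v].
Proof.
move=> lt.
case Ha: (va i \in A :|: E); last by exists (va i); split; rewrite ?Ha ?Hla.
case Hx: (vx i \in A :|: E); last by exists (vx i); split; rewrite ?Hx //; case/andP: (Hll Ha).
case Hn: (vnx i \in A :|: E); last by exists (vnx i); split; rewrite ?Hn //; case/andP: (Hll Ha).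
case Hs: (vs i \in A :|: E); last by exists (vs i); split; rewrite ?Hs ?Hls.
by move: lt; rewrite /cnt Ha Hs Hx Hn.
Qed.

Lemma card_sub_box L j : L \subset box j -> #|L| = cnt L j.
Proof. by move=> s; rewrite -cardIbox (setIidPl s). Qed.

Lemma box_losing L j : L \subset box j -> cnt L j = 3 -> L \in losing_family phi.
Proof.
move=> s c; rewrite inE; apply/orP; left; apply/existsP; exists j.
by rewrite s (card_sub_box s) c.
Qed.

Lemma box3 A j : 3 <= cnt A j -> exists2 L, L \in losing_family phi & L \subset A.
Proof.
have mk : forall a b c, [set a; b; c] \subset box j -> cnt [set a; b; c] j = 3 ->
    a \in A -> b \in A -> c \in A -> exists2 L, L \in losing_family phi & L \subset A.
  move=> a b c s cn aA bA cA; exists [set a; b; c]; first exact: box_losing s cn.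
  exact: sub3.
have sb : forall a b c, a \in box j -> b \in box j -> c \in box j -> [set a; b; c] \subset box j.
  by move=> a b c; apply: sub3.
have bx : [/\ va j \in box j, vs j \in box j, vx j \in box j & vnx j \in box j].
  by rewrite !mem_box /= eqxx.
case: bx => ba bs bx bn.
rewrite /cnt; case Ha: (va j \in A); case Hs: (vs j \in A); case Hx: (vx j \in A);
  case Hn: (vnx j \in A) => //= _.
- by apply: (mk (va j) (vs j) (vx j)); rewrite ?sb // /cnt !inE !vE eqxx.
- by apply: (mk (va j) (vs j) (vx j)); rewrite ?sb // /cnt !inE !vE eqxx.
- by apply: (mk (va j) (vs j) (vnx j)); rewrite ?sb // /cnt !inE !vE eqxx.
- by apply: (mk (va j) (vx j) (vnx j)); rewrite ?sb // /cnt !inE !vE eqxx.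
- by apply: (mk (vs j) (vx j) (vnx j)); rewrite ?sb // /cnt !inE !vE eqxx.
Qed.

Lemma pigeon A E i : (forall j, cnt A j + cnt E j = 4) -> #|E| <= #|A| + 1 ->
  3 <= cnt E i -> exists j, 3 <= cnt A j.
Proof.
move=> full le h3.
case: (boolP [exists j, 3 <= cnt A j]) => [/existsP//|/existsPn no].
have sE : \sum_(j < n) (2 + (j == i)) <= #|E|.
  rewrite card_sum; apply: leq_sum => j _; have := full j; have := no j.
  rewrite -ltnNge; case: eqP => [->|_] /=; lia.
have sAE : #|A| + #|E| = n * 4.
  rewrite !card_sum -big_split /= (eq_bigr (fun=> 4)); last by move=> j _; apply: full.
  by rewrite sum_nat_const card_ord.
have s1 : \sum_(j < n) (2 + (j == i)) = n * 2 + 1.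
  rewrite big_split /= sum_nat_const card_ord (bigD1 i) //= eqxx big1 => [|j /negPf -> //].
  by rewrite addn0.
lia.
Qed.

Hypothesis Hunsat : ~~ [exists f : {ffun 'I_n -> bool}, all (csat f) phi].

Lemma clause_end A E : dj A E -> (forall j, goodb A E j) ->
  exists2 L, L \in losing_family phi & L \subset A.
Proof.
move=> d G.
have litA : forall j (p : bool), (vx j \in A) != p -> lit_vertex (neg_lit (j, p)) \in A.
  move=> j p; rewrite /lit_vertex /neg_lit /=; have := good_lit (G j) d.
  by case: p; case: (vx j \in A) => //=.
have sA : forall j, vs j \in A by move=> j; case/and4P: (G j).
move: Hunsat => /existsPn /(_ [ffun j => vx j \in A]) /allPn [[[l1 l2] l3] Cin].
rewrite /csat !ffunE !negb_or => /and3P [n1 n2 n3].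
exists (clause_set (l1, l2, l3)).
  by rewrite inE; apply/orP; right; apply/hasP; exists (l1, l2, l3).
case: l1 l2 l3 n1 n2 n3 {Cin} => [j1 p1] [j2 p2] [j3 p3] /= n1 n2 n3.
apply/subsetP => w; rewrite /clause_set !inE.
by case/orP => [/orP [/orP [/orP [/orP []|]|]|]|] /eqP ->; rewrite ?sA ?litA.
Qed.

Definition PE A E (b : bool) : Prop :=
  dj A E /\ #|E| = #|A| + b /\
  ((exists i, 3 <= cnt E i) \/
   if b then
     (exists i, cnt E i = 2 /\ cnt A i = 0) \/
     (exists i, [/\ va i \in E, cnt E i = 1, cnt A i = 0 & restok A E i]) \/
     (exists i, [/\ va i \in E, vs i \notin E, cnt E i = 2, cnt A i = 1 & restok A E i])
   else
     (exists i, cnt E i = 2 /\ cnt A i + cnt E i < 4) \/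
     (exists i, cnt E i = 1 /\ cnt A i = 0) \/
     (exists i, [/\ va i \in E, cnt E i = 1, cnt A i = 1 & restok A E i]) \/
     (forall i, freshb A E i || goodb A E i)).

Lemma cnt0 S i : cnt S i = 0 -> va i \notin S.
Proof. by rewrite /cnt; case: (va i \in S). Qed.

Lemma enf A E b : awin (losing_family phi) legal A E b -> PE A E b -> False.
Proof.
elim=> {A E b} [A E b full nolose | A E v vn lg _ IH | A E nf _ IH] [d [hc st]].
- have F4 : forall j, cnt A j + cnt E j = 4.
    by move=> j; rewrite -cntU // full /cnt !in_setT.
  suff [L LF LA] : exists2 L, L \in losing_family phi & L \subset A.
    by move: (nolose L LF); rewrite LA.
  case: st => [[i h3]|].
    have [|j hj] := pigeon F4 _ h3; last exact: box3 hj.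
    by rewrite hc leq_add2l; case: b {hc}.
  case: b hc => hc.
  + by case=> [[i [h1 h2]]|[[i [_ h1 h2 _]]|[i [_ _ h1 h2 _]]]]; have := F4 i; lia.
  + case=> [[i [h1 h2]]|[[i [h1 h2]]|[[i [_ h1 h2 _]]| hall]]]; try (have := F4 i; lia).
    apply: (clause_end d) => j; case/orP: (hall j) => // /andP [/eqP a /eqP e].
    by have := F4 j; rewrite a e.
- apply: IH.
  have vA : v \notin A by move: vn; rewrite inE negb_or => /andP [].
  have vE : v \notin E by move: vn; rewrite inE negb_or => /andP [].
  have cA : forall j, cnt (v |: A) j = cnt A j + (v.1 == j) by move=> j; apply: cnt_add.
  split; [|split].
  + move=> u; rewrite in_setU1 => /orP [/eqP -> | uA] uE; first by rewrite uE in vE.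
    exact: d uA uE.
  + by rewrite hc cardsU1 vA /=; lia.
  case: st => [[i h]|st]; first by left; exists i.
  right; case: st => [[i [h1 h2]]|[[i [ha h1 h2 R]]|[i [ha hs h1 h2 R]]]].
  + left; exists i; rewrite cA h1 h2; split => //; by case: (_ == _).
  + case: (eqVneq v.1 i) => [vi|vi].
    * right; right; left; exists i; split => //; first by rewrite cA h2 vi eqxx.
      exact: restok_addA.
    * right; left; exists i; split => //; by rewrite cA h2 (negPf vi).
  + case: (eqVneq v.1 i) => [vi|vi].
    * right; right; right => j; case: (eqVneq j i) => [->|ji].
      - apply/orP; right; rewrite /goodb ha (m2_good d ha hs h1 h2 vi vn) cA h2 vi eqxx h1.
        by [].
      - exact: (restok_addA vi R) j ji.
    * left; exists i; rewrite cA h1 h2 (negPf vi); split => //.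
- have gen : forall v, v \notin A :|: E ->
    [/\ v \notin E, dj A (v |: E) & #|v |: E| = #|A| + true].
    move=> v vn; have vA : v \notin A by move: vn; rewrite inE negb_or => /andP [].
    have vE : v \notin E by move: vn; rewrite inE negb_or => /andP [].
    split => //; last by rewrite cardsU1 vE hc /=; lia.
    move=> u uA; rewrite in_setU1 => /orP [/eqP Hu | uE]; first by rewrite -Hu uA in vA.
    exact: d uA uE.
  suff [v [vn lg P]] : exists v, [/\ v \notin A :|: E, legal A E v & PE A (v |: E) true].
    exact: IH v vn lg P.
  case: st => [[i h3]|st].
    have [u un] : exists u, u \notin A :|: E.
      case: (pickP (fun u => u \notin A :|: E)) => [u un|none]; first by exists u.
      move: nf; have -> : A :|: E = [set: vertex n]; last by rewrite eqxx.
      by apply/setP => w; rewrite in_setT; apply/negbFE; apply: none.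
    have [v [vi vn lg]] := exists_legal (cnt_notin un).
    have [vnE d' c'] := gen v vn.
    exists v; split => //; split => //; split => //; left; exists i.
    by rewrite cnt_add //; lia.
  case: st => [[i [h2 hlt]]|[[i [h1 h0]]|[[i [ha h1 h1' R]]|hall]]].
  + have lt : cnt (A :|: E) i < 4 by rewrite cntU.
    have [v [vi vn lg]] := exists_legal lt.
    have [vnE d' c'] := gen v vn.
    exists v; split => //; split => //; split => //; left; exists i.
    by rewrite cnt_add // vi eqxx h2.
  + have lt : cnt (A :|: E) i < 4 by rewrite cntU // h1 h0.
    have [v [vi vn lg]] := exists_legal lt.
    have [vnE d' c'] := gen v vn.
    exists v; split => //; split => //; split => //; right; left; exists i.
    by rewrite cnt_add // vi eqxx h1 h0.
  + have /and3P [nsE nxE nnE] := cnt_only_a h1 ha.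
    set v := if vx i \in A then vnx i else vx i.
    have vi : v.1 = i by rewrite /v; case: (_ \in _).
    have vn : v \notin A :|: E.
      rewrite /v; case Hx: (vx i \in A); rewrite inE negb_or.
      + by rewrite (cnt_one_x h1' Hx) nnE.
      + by rewrite Hx nxE.
    have lg : legal A E v.
      have := Hll (A := A) (E := E) (i := i); rewrite inE ha orbT => /(_ isT) /andP [l1 l2].
      by rewrite /v; case: (_ \in _).
    have [vnE d' c'] := gen v vn.
    exists v; split => //; split => //; split => //; right; right; right; exists i.
    split.
    * by rewrite in_setU1 ha orbT.
    * rewrite in_setU1 negb_or nsE andbT /v; by case: (_ \in _); rewrite vE.
    * by rewrite cnt_add // vi eqxx h1.
    * by [].
    * exact: restok_addE.
  + case: (pickP (fun j => freshb A E j)) => [i fi|nofresh].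
      have /andP [/eqP f1 /eqP f2] := fi.
      have vn : va i \notin A :|: E by rewrite inE negb_or !cnt0.
      have [vnE d' c'] := gen _ vn.
      exists (va i); split => //; split => //; split => //; right; right; left; exists i.
      split => //.
      * by rewrite in_setU1 eqxx.
      * by rewrite cnt_add // eqxx f2.
      * by apply: restok_addE => // j _; apply: hall.
    move: nf; have -> : A :|: E = [set: vertex n]; last by rewrite eqxx.
    apply/setP => w; rewrite in_setT.
    have G : forall k, goodb A E k by move=> k; have := hall k; rewrite nofresh.
    have /and4P [h1 h2 h3 h4] := cnt_full (good_full (G w.1) d).
    by have [k [e|[e|[e|e]]]] := vertex_cases w; rewrite e /= in h1 h2 h3 h4 *.
Qed.
End Enf2.

Section Av.
Variable n : nat.
Variable phi : seq (clause n).
Variable legal : {set vertex n} -> {set vertex n} -> vertex n -> bool.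
Variable sg : 'I_n -> bool.
Implicit Types (i j k : 'I_n) (S A E L : {set vertex n}) (v u : vertex n).

Definition tv i := if sg i then vx i else vnx i.
Definition fv i := if sg i then vnx i else vx i.
Definition pp v : vertex n :=
  let i := v.1 in
  if v == va i then tv i else if v == vs i then fv i else if v == tv i then va i else vs i.

Lemma ppE i : [/\ pp (va i) = tv i, pp (vs i) = fv i, pp (tv i) = va i & pp (fv i) = vs i].
Proof. by rewrite /pp /tv /fv /=; case E: (sg i); rewrite /= ?E ?vE ?eqxx. Qed.

Lemma vcases2 v : exists i, v = va i \/ v = vs i \/ v = tv i \/ v = fv i.
Proof.
have [k [->|[->|[->|->]]]] := vertex_cases v; exists k; rewrite /tv /fv; case: (sg k); tauto.
Qed.

Lemma ppK : cancel pp pp.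
Proof.
move=> v; have [k [->|[->|[->|->]]]] := vcases2 v; have [e1 e2 e3 e4] := ppE k.
- by rewrite e1 e3.
- by rewrite e2 e4.
- by rewrite e3 e1.
- by rewrite e4 e2.
Qed.

Lemma pp_inj : injective pp. Proof. exact: can_inj ppK. Qed.

Lemma pp_neq v : pp v != v.
Proof.
have [k [->|[->|[->|->]]]] := vcases2 v; have [e1 e2 e3 e4] := ppE k;
by rewrite ?e1 ?e2 ?e3 ?e4 /tv /fv; case: (sg k); rewrite !vE.
Qed.

Definition Q0 A E := dj A E /\ forall u, (u \in A) = (pp u \in E).

Hypothesis Hpl : forall A E v, Q0 A E -> v \notin A :|: E -> legal A E v ->
  legal A (v |: E) (pp v).
Hypothesis Hsat : all (csat sg) phi.

Lemma fvE j p : sg j = p -> lit_vertex (neg_lit (j, p)) = fv j.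
Proof. by rewrite /lit_vertex /neg_lit /fv /= => ->; case: p. Qed.

Lemma no_lose A E : Q0 A E -> forall L, L \in losing_family phi -> ~~ (L \subset A).
Proof.
move=> [d hq] L; rewrite inE => /orP [/existsP [i /andP [sb /eqP c3]] | /hasP [C CP /eqP ->]].
- apply/negP => LA.
  have : #|L| <= #|A :&: box i| by apply: subset_leq_card; rewrite subsetI LA sb.
  rewrite c3 cardIbox.
  have [e1 e2 e3 e4] := ppE i.
  have h1 : ~~ ((va i \in A) && (tv i \in A)).
    apply/negP => /andP [a t]; apply: (d (tv i)) => //; by rewrite -e1 -hq.
  have h2 : ~~ ((vs i \in A) && (fv i \in A)).
    apply/negP => /andP [a t]; apply: (d (fv i)) => //; by rewrite -e2 -hq.
  move: h1 h2; rewrite /cnt /tv /fv; case: (sg i); b4 A i => //=.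
- have := allP Hsat C CP; apply: contraL => LA.
  have key : forall j p, sg j = p -> vs j \in A -> lit_vertex (neg_lit (j, p)) \in A -> False.
    move=> j p e sA; rewrite fvE // => fA; have [_ e2 _ _] := ppE j.
    by apply: (d (fv j)) => //; rewrite -e2 -hq.
  case: C {CP} LA => [[[j1 p1] [j2 p2]] [j3 p3]] LA.
  have m : forall w, w \in clause_set ((j1, p1), (j2, p2), (j3, p3)) -> w \in A.
    by move=> w wL; apply: (subsetP LA).
  rewrite /csat /= !negb_or; apply/and3P; split; apply/negP => /eqP e.
  + by apply: (key _ _ e); apply: m; rewrite /clause_set !inE eqxx ?orbT.
  + by apply: (key _ _ e); apply: m; rewrite /clause_set !inE eqxx ?orbT.
  + by apply: (key _ _ e); apply: m; rewrite /clause_set !inE eqxx ?orbT.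
Qed.

Lemma av_win m : forall A E, #|~: (A :|: E)| <= m -> Q0 A E ->
  awin (losing_family phi) legal A E false.
Proof.
elim: m => [|m IH] A E hm hQ.
  apply: awin_end; last exact: (no_lose hQ).
  apply/setP => w; rewrite in_setT; case: (boolP (w \in A :|: E)) => // wn.
  have : w \in ~: (A :|: E) by rewrite inE.
  by move: hm; rewrite leqn0 => /eqP/cards0_eq ->; rewrite inE.
case: (boolP (A :|: E == [set: vertex n])) => [/eqP full|nf].
  by apply: awin_end; last exact: (no_lose hQ).
apply: awin_en => // v vn lg.
case: (hQ) => d hq.
have vA : v \notin A by move: vn; rewrite inE negb_or => /andP [].
have vE : v \notin E by move: vn; rewrite inE negb_or => /andP [].
have pA : pp v \notin A by rewrite hq ppK.
have pE : pp v \notin E by rewrite -hq.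
have pv := pp_neq v.
apply: (@awin_av _ _ _ A (v |: E) (pp v)).
- by rewrite !inE negb_or pA /= negb_or pv.
- exact: Hpl.
apply: IH.
- rewrite -ltnS; apply: leq_trans hm; apply: proper_card; apply/properP; split.
    by rewrite setCS; apply/subsetP => w; rewrite !inE => /orP [] ->; rewrite ?orbT.
  by exists v; [rewrite inE | rewrite !inE eqxx !orbT].
- split.
  + move=> u; rewrite !in_setU1 => /orP [/eqP -> | uA] /orP [/eqP e | uE].
    * by move: pv; rewrite e eqxx.
    * by move: pE; rewrite uE.
    * by move: vA; rewrite -e uA.
    * exact: d uA uE.
  + move=> u; rewrite !in_setU1 hq; congr (_ || _).
    by rewrite -[u == pp v](inj_eq pp_inj) ppK.
Qed.
End Av.

Lemma Hla_r n (A E : {set vertex n}) i : restricted A E (va i).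
Proof. by rewrite /restricted /=. Qed.

Lemma Hll_r n (A E : {set vertex n}) i : va i \in A :|: E ->
  restricted A E (vx i) && restricted A E (vnx i).
Proof. by rewrite /restricted /= ?kE => ->. Qed.

Lemma Hls_r n (A E : {set vertex n}) i : vx i \in A :|: E -> vnx i \in A :|: E ->
  restricted A E (vs i).
Proof. by rewrite /restricted /= ?kE ?eqxx => -> ->. Qed.

Lemma Hpl_r n (sg : 'I_n -> bool) (A E : {set vertex n}) v : Q0 sg A E -> v \notin A :|: E ->
  restricted A E v -> restricted A (v |: E) (pp sg v).
Proof.
move=> [d hq] vn; have [i [ev|[ev|[ev|ev]]]] := vcases2 sg v; rewrite ev in vn *;
  have [e1 e2 e3 e4] := ppE sg i.
- rewrite e1 => _; rewrite /restricted /tv; case: (sg i); by rewrite /= ?kE !inE eqxx ?orbT.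
- rewrite /restricted /= ?kE ?eqxx /= => /andP [hx hn].
  have : fv sg i \in A :|: E by rewrite /fv; case: (sg i).
  rewrite inE => /orP [fA|fE].
  + by move: vn; rewrite inE -e4 -hq fA orbT.
  + by move: vn; rewrite inE hq e2 fE.
- by rewrite e3 => _; apply: Hla_r.
- rewrite e4 => lg.
  have ha : va i \in A :|: E by move: lg; rewrite /restricted /fv; case: (sg i); rewrite /= ?kE.
  have ht : tv sg i \in A :|: E.
    move: ha; rewrite !inE => /orP [aA|aE].
    + by rewrite -e1 -hq aA orbT.
    + by rewrite hq e3 aE.
  apply: Hls_r; move: ht; rewrite /tv /fv; case: (sg i); rewrite !inE ?eqxx /= ?orbT //; by case/orP => ->; rewrite ?orbT.
Qed.

Theorem lemma4 (n : nat) (phi : seq (clause n)) (Hphi : all wf_clause phi) :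
  awin (losing_family phi) (@restricted n) set0 set0 false <->
  awin (losing_family phi) (@unrestricted n) set0 set0 false.
Proof.
case: (boolP [exists f : {ffun 'I_n -> bool}, all (csat f) phi]) => [/existsP [f Hf] | Hun].
- have Q00 : Q0 f set0 set0 by split => [u|u]; rewrite !inE.
  split => _.
  + by apply: (@av_win n phi _ f _ Hf _ _ _ (leqnn _) Q00).
  + apply: (@av_win n phi _ f _ Hf _ _ _ (leqnn _) Q00).
    exact: Hpl_r.
- have P0 : PE (set0 : {set vertex n}) set0 false.
    split; first by move=> u; rewrite inE.
    split; first by rewrite !cards0.
    by right; right; right; right => i; rewrite /freshb /cnt !inE.
  split => H; exfalso.
  + exact: (enf (@Hla_r n) (@Hll_r n) (@Hls_r n) Hun H P0).
  + by apply: (enf _ _ _ Hun H P0).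
Qed.
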